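(* Let $\mathrm{M}$ be a simple matroid on a finite set $E$ and $\mathcal{G}$ a building set of its lattice of flats such that $(\mathrm{M},\mathcal{G})$ is flag, and let $e\in E$. Then the deletion $(\mathrm{M}\setminus e,\mathcal{G}\setminus e)$ is flag, where $\mathcal{G}\setminus e=\{S\in\mathcal{L}(\mathrm{M}\setminus e):\operatorname{cl}_{\mathrm{M}}(S)\in\mathcal{G}\}$.
   Context: Flats are ordered by inclusion, $\hat0=\varnothing$, $F\vee G=\operatorname{cl}(F\cup G)$. A building set of a geometric lattice $\mathcal{L}$ is $\mathcal{G}\subseteq\mathcal{L}\setminus\{\hat0\}$ such that for every $F\neq\hat0$ the join map $\prod_{G\in\max\mathcal{G}_{\leqslant F}}[\hat0,G]\to[\hat0,F]$ is a poset isomorphism. $\mathcal{G}\setminus e$ is a building set of $\mathcal{L}(\mathrm{M}\setminus e)$. $\mathcal{S}\subseteq\mathcal{G}$ is nested if for every antichain $A\subseteq\mathcal{S}$ and every $\{S_1,\dots,S_k\}\subseteq A$, $k\geqslant2$, $S_1\vee\dots\vee S_k\notin\mathcal{G}$. $\mathbf{N}(\mathcal{L},\mathcal{G})$ denotes the simplicial complex of nested sets contained in $\mathcal{G}\setminus\max\mathcal{G}$; a built matroid is flag if this complex is flag (all minimal non-faces have size $2$). *)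

(* Defs.v *)
From mathcomp Require Import all_boot.
Set Implicit Arguments. Unset Strict Implicit. Unset Printing Implicit Defensive.

Section Matroids.
Variable T : finType.

Definition is_matroid (E : {set T}) (indep : {set T} -> bool) : Prop :=
  [/\ indep set0,
      (forall I : {set T}, indep I -> I \subset E),
      (forall I J : {set T}, J \subset I -> indep I -> indep J) &
      (forall I J : {set T}, indep I -> indep J -> #|I| < #|J| ->
          exists2 x, x \in J :\: I & indep (x |: I))].

Definition rk (indep : {set T} -> bool) (A : {set T}) : nat :=
  \max_(I : {set T} | (I \subset A) && indep I) #|I|.

Definition cl (E : {set T}) (indep : {set T} -> bool) (A : {set T}) : {set T} :=
  [set x in E | rk indep (x |: A) == rk indep A].

Definition is_flat (E : {set T}) (indep : {set T} -> bool) (F : {set T}) : bool :=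
  (F \subset E) && (cl E indep F == F).

(* simple = no loops and no parallel elements *)
Definition is_simple (E : {set T}) (indep : {set T} -> bool) : Prop :=
  forall x y, x \in E -> y \in E -> indep [set x; y].

Definition del_ground (E : {set T}) (e : T) : {set T} := E :\ e.
Definition del_indep (indep : {set T} -> bool) (e : T) : {set T} -> bool :=
  fun I => indep I && (e \notin I).

Definition fjoin (E : {set T}) (indep : {set T} -> bool) (B : {set {set T}}) : {set T} :=
  cl E indep (\bigcup_(X in B) X).

Definition max_below (G : {set {set T}}) (F : {set T}) : {set {set T}} :=
  [set X in G | (X \subset F) &&
     [forall Y in G, (Y \subset F) && (X \subset Y) ==> (Y == X)]].

(* building set of the lattice of flats, 0 = set0 *)
Definition is_building (E : {set T}) (indep : {set T} -> bool) (G : {set {set T}}) : Prop :=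
  (forall X : {set T}, X \in G -> is_flat E indep X && (X != set0)) /\
  forall F : {set T}, is_flat E indep F -> F != set0 ->
    let mx := max_below G F in
    let adm := fun x : {set T} -> {set T} =>
       forall X : {set T}, X \in mx -> is_flat E indep (x X) /\ x X \subset X in
    let jn := fun x : {set T} -> {set T} =>
       cl E indep (\bigcup_(X in mx) x X) in
    (* order embedding of the product into [0, F] *)
    (forall x y, adm x -> adm y ->
        (jn x \subset jn y <-> forall X : {set T}, X \in mx -> x X \subset y X)) /\
    (* surjectivity onto [0, F] *)
    (forall H : {set T}, is_flat E indep H -> H \subset F ->
        exists2 x, adm x & jn x = H).

Definition is_antichain (A : {set {set T}}) : bool :=
  [forall X in A, forall Y in A, (X \subset Y) ==> (X == Y)].

Definition is_nested (E : {set T}) (indep : {set T} -> bool) (G S : {set {set T}}) : Prop :=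
  S \subset G /\
  forall A : {set {set T}}, A \subset S -> is_antichain A ->
    forall B : {set {set T}}, B \subset A -> 2 <= #|B| -> fjoin E indep B \notin G.

Definition maxG (G : {set {set T}}) : {set {set T}} :=
  [set X in G | [forall Y in G, (X \subset Y) ==> (Y == X)]].

(* the complex N(L,G): nested sets contained in G \ max G; flag = every
   minimal non-face has exactly two elements *)
Definition is_flag (E : {set T}) (indep : {set T} -> bool) (G : {set {set T}}) : Prop :=
  forall X : {set {set T}}, X \subset G :\: maxG G ->
    ~ is_nested E indep G X ->
    (forall Y : {set {set T}}, Y \proper X -> is_nested E indep G Y) ->
    #|X| = 2.

Definition del_building (E : {set T}) (indep : {set T} -> bool) (G : {set {set T}}) (e : T) : {set {set T}} :=
  [set S | is_flat (del_ground E e) (del_indep indep e) S &&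
           (cl E indep S \in G)].

End Matroids.

(* Main.v *)
Require Import Defs.
From mathcomp Require Import all_boot.
From mathcomp Require Import zify.

Set Implicit Arguments. Unset Strict Implicit. Unset Printing Implicit Defensive.

Section Mat.
Variables (T : finType) (E : {set T}) (indep : {set T} -> bool).
Hypothesis hM : is_matroid E indep.

Lemma rk_ub (I A : {set T}) : I \subset A -> indep I -> #|I| <= rk indep A.
Proof.
move=> sIA iI; rewrite /rk.
by apply: (leq_bigmax_cond (F := fun J : {set T} => #|J|)); rewrite sIA.
Qed.

Lemma rk_wit (A : {set T}) : exists2 I : {set T}, (I \subset A) && indep I & #|I| = rk indep A.
Proof.
case: hM => i0 _ _ _.
have : 0 < #|[pred J : {set T} | (J \subset A) && indep J]|.
  by apply/card_gt0P; exists set0; rewrite inE sub0set i0.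
move=> /(eq_bigmax_cond (fun J : {set T} => #|J|)) [J HJ Heq].
exists J; first by move: HJ; rewrite inE.
rewrite /rk Heq //.
Qed.

Lemma rk_mono (A B : {set T}) : A \subset B -> rk indep A <= rk indep B.
Proof.
move=> sAB; case: (rk_wit A) => I /andP [sIA iI] <-.
by apply: rk_ub => //; apply: subset_trans sAB.
Qed.

Lemma augment (I J : {set T}) : indep I -> indep J -> #|I| < #|J| ->
  exists2 x : T, x \in J :\: I & indep (x |: I).
Proof. by case: hM => _ _ _; apply. Qed.

Lemma indep_sub (I J : {set T}) : J \subset I -> indep I -> indep J.
Proof. by case: hM => _ _ h _; apply: h. Qed.

Lemma indep_E (I : {set T}) : indep I -> I \subset E.
Proof. by case: hM => _ h _ _; apply: h. Qed.

Lemma key (I A : {set T}) x : I \subset A -> indep I -> #|I| = rk indep A ->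
  rk indep A < rk indep (x |: A) -> x \notin I /\ indep (x |: I).
Proof.
move=> sIA iI cI lt.
case: (rk_wit (x |: A)) => K /andP [sK iK] cK.
have : #|I| < #|K| by rewrite cI cK.
case/(augment iI iK) => z /setDP [zK zI] iz.
have : z \in x |: A by apply: (subsetP sK).
rewrite in_setU1; case/orP => [/eqP <- // | zA].
have : #|z |: I| <= rk indep A.
  by apply: rk_ub => //; apply/subsetP => y; rewrite in_setU1; case/orP => [/eqP -> //|]; apply: (subsetP sIA).
by rewrite cardsU1 zI -cI; lia.
Qed.

Lemma key_conv (I A : {set T}) x : I \subset A -> x \notin I -> indep (x |: I) ->
  #|I| = rk indep A -> rk indep A < rk indep (x |: A).
Proof.
move=> sIA xI ix cI.
have : #|x |: I| <= rk indep (x |: A) by apply: rk_ub => //; apply: setUS.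
by rewrite cardsU1 xI -cI.
Qed.

Lemma extend (B I : {set T}) : I \subset B -> indep I ->
  exists J : {set T}, [/\ I \subset J, J \subset B, indep J & #|J| = rk indep B].
Proof.
move=> sIB iI; have hle := rk_ub sIB iI.
move: {2}(rk indep B - #|I|) (erefl (rk indep B - #|I|)) => n.
elim: n I sIB iI hle => [|n IH] I sIB iI hle Hn.
  by exists I; split => //; lia.
case: (rk_wit B) => K /andP [sK iK] cK.
have : #|I| < #|K| by lia.
case/(augment iI iK) => z /setDP [zK zI] iz.
have sz : z |: I \subset B.
  by apply/subsetP => y; rewrite in_setU1; case/orP => [/eqP -> |]; [apply: (subsetP sK) | apply: (subsetP sIB)].
have hle' := rk_ub sz iz.
have : rk indep B - #|z |: I| = n by rewrite cardsU1 zI /=; lia.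
case/(IH _ sz iz hle') => J [sJ sJB iJ cJ].
exists J; split => //; apply: subset_trans sJ; exact: subsetUr.
Qed.

Notation clM := (cl E indep).

Lemma cl_sub (A : {set T}) : clM A \subset E.
Proof. by apply/subsetP => x; rewrite inE => /andP []. Qed.

Lemma cl_in (A : {set T}) y : y \in A -> y \in E -> y \in clM A.
Proof.
move=> yA yE; rewrite inE yE /=.
have -> : y |: A = A by apply/setUidPr; rewrite sub1set.
by [].
Qed.

Lemma cl_ext (A : {set T}) : A \subset E -> A \subset clM A.
Proof. by move=> sAE; apply/subsetP => y yA; apply: cl_in yA (subsetP sAE y yA). Qed.

Lemma cl_mono (A B : {set T}) : A \subset B -> clM A \subset clM B.
Proof.
move=> sAB; apply/subsetP => x; rewrite !inE => /andP [xE /eqP hx].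
rewrite xE /=; apply/eqP; apply/eqP; rewrite eqn_leq andbC rk_mono ?subsetUr //=.
rewrite leqNgt; apply/negP => lt.
case: (rk_wit A) => I /andP [sIA iI] cI.
case: (extend (subset_trans sIA sAB) iI) => J [sIJ sJB iJ cJ].
case: (key sJB iJ cJ lt) => xJ ixJ.
have xI : x \notin I by apply: contra xJ; apply: (subsetP sIJ).
have ixI : indep (x |: I) by apply: indep_sub ixJ; apply: setUS.
have := key_conv sIA xI ixI cI; rewrite hx; lia.
Qed.

Lemma rk_cl (A : {set T}) : rk indep (clM A) <= rk indep A.
Proof.
case: (rk_wit (clM A)) => K /andP [sK iK] <-.
case: (rk_wit A) => I /andP [sIA iI] cI.
rewrite -cI leqNgt; apply/negP => lt.
case: (augment iI iK lt) => z /setDP [zK zI] iz.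
have : z \in clM A by apply: (subsetP sK).
rewrite inE => /andP [_ /eqP hz].
have := key_conv sIA zI iz cI; rewrite hz; lia.
Qed.

Lemma cl_idem (A : {set T}) : clM (clM A) \subset clM A.
Proof.
apply/subsetP => x; rewrite !inE => /andP [xE /eqP hx].
rewrite xE /=; apply/eqP; apply/eqP; rewrite eqn_leq andbC rk_mono ?subsetUr //=.
rewrite leqNgt; apply/negP => lt.
case: (rk_wit A) => I /andP [sIA iI] cI.
case: (key sIA iI cI lt) => xI ixI.
have sI : I \subset clM A.
  apply/subsetP => y yI; apply: cl_in; first exact: (subsetP sIA).
  exact: (subsetP (indep_E iI)).
have := rk_ub (setUS [set x] sI) ixI.
rewrite cardsU1 xI hx; have := rk_cl A; lia.
Qed.

End Mat.

Lemma rk_del (T : finType) (indep : {set T} -> bool) e (A : {set T}) :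
  e \notin A -> rk (del_indep indep e) A = rk indep A.
Proof.
move=> eA; rewrite /rk /del_indep; apply: eq_bigl => I.
case sIA: (I \subset A) => //=.
have -> : e \notin I by apply: contra eA; apply: (subsetP sIA).
by rewrite andbT.
Qed.

Lemma cl_del (T : finType) (E : {set T}) (indep : {set T} -> bool) e (A : {set T}) :
  e \notin A -> cl (E :\ e) (del_indep indep e) A = cl E indep A :\ e.
Proof.
move=> eA; apply/setP => x; rewrite /cl !inE.
case: (x =P e) => //= /eqP xe.
rewrite !rk_del //.
by rewrite in_setU1 negb_or eq_sym xe.
Qed.

Theorem lemma3p18 (T : finType) (E : {set T}) (indep : {set T} -> bool)
  (G : {set {set T}}) (e : T) :
  is_matroid E indep -> is_simple E indep ->
  is_building E indep G -> is_flag E indep G ->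
  e \in E ->
  is_flag (del_ground E e) (del_indep indep e) (del_building E indep G e).
Proof.
move=> hM _ _ hflag _.
set E' := del_ground E e; set ind' := del_indep indep e.
set G' := del_building E indep G e.
set phi := cl E indep.
have hG' : forall S, S \in G' -> [/\ e \notin S, S \subset E, phi S \in G & S = phi S :\ e].
  move=> S; rewrite inE /is_flat => /andP [/andP [sS /eqP cS] pS].
  have eS : e \notin S by apply/negP => /(subsetP sS); rewrite !inE eqxx.
  split => //; first by apply: subset_trans sS (subsetDl _ _).
  by rewrite -{1}cS /E' /del_ground cl_del.
have phi_inj : {in G' &, injective phi}.
  move=> S S' hS hS' eq; case: (hG' S hS) => _ _ _ ->; case: (hG' S' hS') => _ _ _ ->.
  by rewrite eq.
have phi_rev : forall S S' : {set T}, S \in G' -> S' \in G' -> phi S \subset phi S' -> S \subset S'.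
  move=> S S' hS hS' sub; case: (hG' S hS) => _ _ _ ->; case: (hG' S' hS') => _ _ _ ->.
  by apply: setSD.
have J : forall B : {set {set T}}, B \subset G' ->
    (fjoin E' ind' B \in G') = (fjoin E indep (phi @: B) \in G).
  move=> B sB.
  set U := \bigcup_(S in B) S.
  have eU : e \notin U.
    apply/negP => /bigcupP [S SB eS]; case: (hG' S (subsetP sB S SB)) => eS' _ _ _.
    by rewrite eS in eS'.
  have UE : U \subset E.
    by apply/bigcupsP => S SB; case: (hG' S (subsetP sB S SB)).
  have J1 : fjoin E' ind' B = phi U :\ e by rewrite /fjoin /E' /del_ground cl_del.
  have J2 : phi (phi U :\ e) = phi U.
    apply/eqP; rewrite eqEsubset; apply/andP; split.
      apply: subset_trans (cl_idem hM U); apply: cl_mono => //; exact: subsetDl.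
    apply: cl_mono => //; apply/subsetP => x xU; rewrite !inE.
    have xe : x != e by apply: contraNneq eU => <-.
    rewrite xe /=; have := @cl_in _ E indep _ _ xU (subsetP UE x xU); by rewrite inE.
  have J3 : fjoin E indep (phi @: B) = phi U.
    apply/eqP; rewrite eqEsubset; apply/andP; split.
      apply: subset_trans (cl_idem hM U); apply: cl_mono => //.
      apply/bigcupsP => Y /imsetP [S SB ->]; apply: cl_mono => //.
      by apply: (bigcup_sup S).
    apply: cl_mono => //; apply/bigcupsP => S SB.
    case: (hG' S (subsetP sB S SB)) => _ SE _ _.
    apply: subset_trans (cl_ext indep SE) _.
    by apply: (bigcup_sup (phi S)); apply: imset_f.
  rewrite J1 J3; apply/idP/idP.
    by rewrite inE -/phi => /andP [_]; rewrite J2.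
  move=> hU; rewrite inE -/phi J2 hU andbT /is_flat.
  rewrite /E' /del_ground cl_del ?setD11 // -/phi J2 eqxx andbT.
  by apply: setSD; apply: cl_sub.
have pre : forall (W V : {set {set T}}), V \subset phi @: W ->
    V = phi @: [set S in W | phi S \in V].
  move=> W V sV; apply/setP => Y; apply/idP/idP.
    move=> YV; case/imsetP: (subsetP sV Y YV) => S SW eY.
    by apply/imsetP; exists S => //; rewrite inE SW -eY.
  by case/imsetP => S; rewrite inE => /andP [_ ?] ->.
move=> X sX notnest minnest.
have sXG : X \subset G' by apply: subset_trans sX (subsetDl _ _).
have injX : {in X &, injective phi}.
  by move=> S S' hS hS'; apply: phi_inj; apply: (subsetP sXG).
set Y := phi @: X.
have -> : #|X| = #|Y| by rewrite card_in_imset.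
apply: hflag.
- have maxP : forall S, S \in G' -> S \notin maxG G' ->
      exists2 S'', S'' \in G' & (S \subset S'') && (S'' != S).
    move=> S SG; rewrite /maxG in_set SG /= negb_forall => /existsP [S''].
    by rewrite !negb_imply => /andP [H1 H2]; exists S''.
  apply/subsetP => Z /imsetP [S SX ->].
  move: (subsetP sX S SX); rewrite in_setD => /andP [nmax SG].
  case: (hG' S SG) => _ _ pG _.
  rewrite in_setD pG andbT /maxG inE pG /= negb_forall.
  case: (maxP S SG nmax) => S'' S''G /andP [sS ne].
  apply/existsP; exists (phi S''); rewrite !negb_imply.
  case: (hG' S'' S''G) => _ _ -> _ /=.
  apply/andP; split; first by rewrite /phi; apply: cl_mono.
  apply: contra ne => /eqP /(phi_inj _ _ S''G SG) ->; exact: eqxx.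
- move=> [_ hY]; apply: notnest; split => // A sAX antA B sBA cB.
  have sBG : B \subset G' by apply: subset_trans sBA (subset_trans sAX sXG).
  rewrite J //; apply: (hY (phi @: A)).
  + exact: imsetS.
  + apply/forallP => Y1; apply/implyP => /imsetP [S1 S1A ->].
    apply/forallP => Y2; apply/implyP => /imsetP [S2 S2A ->].
    apply/implyP => sub.
    have S1G := subsetP sXG S1 (subsetP sAX S1 S1A).
    have S2G := subsetP sXG S2 (subsetP sAX S2 S2A).
    have := phi_rev _ _ S1G S2G sub.
    move/forallP: antA => /(_ S1) /implyP /(_ S1A) /forallP /(_ S2) /implyP /(_ S2A) /implyP h.
    by move/h => /eqP ->.
  + exact: imsetS.
  + rewrite card_in_imset //; move=> S S' hS hS'; apply: phi_inj; exact: (subsetP sBG).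
- move=> Z pZ.
  have sZ : Z \subset Y by apply: proper_sub pZ.
  set W := [set S in X | phi S \in Z].
  have ZW := pre X Z sZ.
  have sWX : W \subset X by apply/subsetP => S; rewrite inE => /andP [].
  have pW : W \proper X.
    rewrite properEneq sWX andbT; apply/eqP => eWX.
    by move: pZ; rewrite ZW -/W eWX /Y properE subxx.
  case: (minnest W pW) => _ hW.
  split; first by apply: subset_trans sZ _; apply/subsetP => U /imsetP [S SX ->];
    case: (hG' S (subsetP sXG S SX)).
  move=> A sAZ antA B sBA cB.
  have sWG : W \subset G' by apply: subset_trans sWX sXG.
  set A' := [set S in W | phi S \in A].
  set B' := [set S in W | phi S \in B].
  have sB : B \subset phi @: W by rewrite -ZW; apply: subset_trans sBA sAZ.
  have eB := pre W B sB.
  have sB'G : B' \subset G'.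
    by apply: subset_trans sWG; apply/subsetP => S; rewrite inE => /andP [].
  have cB' : #|B| = #|B'|.
    rewrite {1}eB card_in_imset // => S S' hS hS'; apply: phi_inj; exact: (subsetP sB'G).
  rewrite {1}eB -J //; apply: (hW A').
  + by apply/subsetP => S; rewrite inE => /andP [].
  + apply/forallP => S1; apply/implyP; rewrite inE => /andP [S1W S1A].
    apply/forallP => S2; apply/implyP; rewrite inE => /andP [S2W S2A].
    apply/implyP => sub.
    have S1G := subsetP sWG S1 S1W; have S2G := subsetP sWG S2 S2W.
    move/forallP: antA => /(_ (phi S1)) /implyP /(_ S1A) /forallP /(_ (phi S2)) /implyP /(_ S2A) /implyP h.
    have := h (cl_mono hM sub) => /eqP /phi_inj -> //.
  + apply/subsetP => S; rewrite !inE => /andP [-> SB] /=.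
    exact: (subsetP sBA).
  + by rewrite -cB'.
Qed.
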